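(* Let $\ell\in\mathbb{N}$, $r\in\mathbb{N}_0$, and let $J_0,\dots,J_\ell,I_1,\dots,I_r\subseteq\mathbb{R}$ satisfy conditions (i)–(iv) of the definition of a connected CL-graph, with $G$ the intersection graph on $J_0,\dots,J_\ell,I_1,\dots,I_r$. For $0\le j\le\ell-1$ put $F_j=\{J_j,J_{j+1}\}\cup\{I_i: 1\le i\le r,\ j\in I_i\}$. Then the maximal cliques of $G$ are exactly $F_0,F_1,\dots,F_{\ell-1}$; in particular $c(G)=\ell$, and $\ell(G)=\ell$ (with $J_0,J_1,\dots,J_\ell$ forming an induced path of length $\ell$).
   Context: $c(G)$ is the number of maximal cliques of $G$; $\ell(G)$ is the length (number of edges) of a longest induced path of the connected graph $G$. Vertices of the intersection graph are identified with the sets defining them. Intersection graph: given a finite list of sets $S_1,\dots,S_m$, the intersection graph on this list has one vertex for each $S_i$ (distinct indices give distinct vertices), and the vertices corresponding to $S_i$ and $S_j$ ($i\neq j$) are adjacent iff $S_i\cap S_j\neq\emptyset$. Conditions defining a connected CL-graph, with $\mathbb{N}=\{1,2,\dots\}$, $\mathbb{N}_0=\{0,1,2,\dots\}$: (i) $J_0=\{0\}$ and $J_j=[j-1,j]$ for $1\le j\le \ell$; (ii) for each $1\le i\le r$ there is some $t\in\mathbb{N}$ with $I_i=[a_1,b_1]\cup[a_2,b_2]\cup\cdots\cup[a_t,b_t]$, where $a_1,\dots,a_t\in\mathbb{N}_0$, $b_1,\dots,b_t\in\mathbb{R}$, $a_1<b_1<a_2<b_2<\cdots<a_t<b_t<\ell$,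 and $a_{k+1}-b_k>2$ for all $1\le k\le t-1$; (iii) if $\{I_{i_1},\dots,I_{i_t}\}\subseteq\{I_1,\dots,I_r\}$ satisfies $I_{i_p}\cap I_{i_q}\neq\emptyset$ for all $1\le p<q\le t$, then $\bigcap_{k=1}^t I_{i_k}\neq\emptyset$; (iv) if $I_p\cap I_q\neq\emptyset$ and $j\in I_p\setminus I_q$ for some $j\in\mathbb{N}_0$, then ($j+1\notin I_p$ implies $j+1\notin I_q$) and ($j-1\notin I_p$ implies $j-1\notin I_q$). *)

(* Defs.v *)
From HB Require Import structures.
From mathcomp Require Import all_boot all_order all_algebra.
From mathcomp Require Import boolp classical_sets.
From mathcomp Require Import Rstruct.
From Stdlib Require Rdefinitions.
Notation R := Rdefinitions.R.
Set Implicit Arguments. Unset Strict Implicit. Unset Printing Implicit Defensive.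
Import Order.TTheory GRing.Theory Num.Theory.
Local Open Scope ring_scope.

(* Intersection graph on a finite family of sets S : V -> set R
   (vertices are the indices, so distinct indices give distinct vertices). *)
Definition iadj (V : finType) (S : V -> set R) (u v : V) : Prop :=
  u <> v /\ exists x : R, S u x /\ S v x.

Definition is_clique (V : finType) (S : V -> set R) (K : {set V}) : Prop :=
  forall u v, u \in K -> v \in K -> u <> v -> iadj S u v.

Definition is_max_clique (V : finType) (S : V -> set R) (K : {set V}) : Prop :=
  is_clique S K /\
  forall K' : {set V}, is_clique S K' -> K \subset K' -> K' = K.

Definition num_max_cliques (V : finType) (S : V -> set R) : nat :=
  #|[set K : {set V} | `[< is_max_clique S K >]]|.

(* an induced path is a duplicate-free vertex sequence v_0..v_k with
   v_i ~ v_j iff |i - j| = 1; its length is k = size p - 1 *)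
Definition induced_path (V : finType) (S : V -> set R) (p : seq V) : Prop :=
  uniq p /\ (0 < size p)%N /\
  forall (x0 : V) (i j : nat), (i < size p)%N -> (j < size p)%N ->
    (iadj S (nth x0 p i) (nth x0 p j) <-> (i.+1 = j \/ j.+1 = i)).

Definition longest_induced_path_length (V : finType) (S : V -> set R) (n : nat)
  : Prop :=
  (exists p, induced_path S p /\ size p = n.+1) /\
  (forall p, induced_path S p -> (size p <= n.+1)%N).

Definition CL_J (l : nat) (j : 'I_l.+1) : set R :=
  fun x => if (j == 0 :> nat) then x = 0
           else (j%:R - 1 <= x) /\ (x <= j%:R).

Definition CL_cond_ii (l : nat) (I : set R) : Prop :=
  exists (t : nat) (a b : nat -> R),
    (0 < t)%N /\
    (forall k, (k < t)%N -> exists n : nat, a k = n%:R) /\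
    (forall k, (k < t)%N -> a k < b k) /\
    (forall k, (k.+1 < t)%N -> b k < a k.+1) /\
    b t.-1 < l%:R /\
    (forall k, (k.+1 < t)%N -> a k.+1 - b k > 2) /\
    (forall x, I x <-> exists2 k, (k < t)%N & (a k <= x /\ x <= b k)).

Definition CL_cond_iii (r : nat) (I : 'I_r -> set R) : Prop :=
  forall A : {set 'I_r},
    (forall p q, p \in A -> q \in A -> exists x, I p x /\ I q x) ->
    exists x, forall k, k \in A -> I k x.

Definition CL_cond_iv (r : nat) (I : 'I_r -> set R) : Prop :=
  forall (p q : 'I_r) (j : nat),
    (exists x, I p x /\ I q x) ->
    I p j%:R -> ~ I q j%:R ->
    (~ I p (j%:R + 1) -> ~ I q (j%:R + 1)) /\
    (~ I p (j%:R - 1) -> ~ I q (j%:R - 1)).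

(* vertex type: inl j is J_j (0 <= j <= l), inr i is I_{i+1} *)
Definition CL_V (l r : nat) : finType := ('I_l.+1 + 'I_r)%type.

Definition CL_sets (l r : nat) (I : 'I_r -> set R) : CL_V l r -> set R :=
  fun v => match v with inl j => CL_J j | inr i => I i end.

Definition CL_F (l r : nat) (I : 'I_r -> set R) (j : nat) : {set CL_V l r} :=
  [set (inl (inord j) : CL_V l r); inl (inord j.+1)] :|:
  [set (inr i : CL_V l r) | i in [set i : 'I_r | `[< I i j%:R >]]].

(* Main.v *)
Require Import Defs.
From HB Require Import structures.
From mathcomp Require Import all_boot all_order all_algebra.
From mathcomp Require Import boolp classical_sets.
From mathcomp Require Import Rstruct.
From mathcomp Require Import lra zify.
Set Implicit Arguments. Unset Strict Implicit. Unset Printing Implicit Defensive.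
Import Order.TTheory GRing.Theory Num.Theory.
Local Open Scope ring_scope.

Lemma ii_gap (t : nat) (a b : nat -> R) :
  (forall k, (k < t)%N -> a k < b k) ->
  (forall k, (k.+1 < t)%N -> b k < a k.+1) ->
  (forall k, (k.+1 < t)%N -> a k.+1 - b k > 2) ->
  forall k k', (k < k')%N -> (k' < t)%N -> a k' - b k > 2.
Proof.
move=> hab hba hg k k' hkk'.
have -> : k' = (k + (k' - k).-1).+1 by lia.
elim: (k' - k).-1 => [|d IH] ht.
  by rewrite addn0; apply: hg; lia.
have h1 := IH ltac:(lia).
have h2 : a (k + d).+1 < b (k + d).+1 by apply: hab; lia.
have h3 : b (k + d).+1 < a (k + d.+1).+1 by rewrite addnS; apply: hba; lia.
lra.
Qed.

Section Comp.
Variables (l : nat) (J : set R).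
Hypothesis HJ : CL_cond_ii l J.

Lemma comp_lt x : J x -> 0 <= x /\ x < l%:R.
Proof.
case: HJ => t [a [b [t0 [ha [hab [hba [hbl [hg hJ]]]]]]]].
move/hJ=> [k kt [h1 h2]]; split.
  by case: (ha k kt) => n e; apply: le_trans h1; rewrite e.
apply: le_lt_trans h2 _; apply: le_lt_trans hbl.
have hk : (k <= t.-1)%N by lia.
move: hk; rewrite leq_eqVlt => /orP [/eqP -> //|hk].
have := ii_gap hab hba hg hk ltac:(lia).
have := hab k kt; have := hab t.-1 ltac:(lia). lra.
Qed.

Lemma comp_trunc x : J x -> J (Num.truncn x)%:R /\ (Num.truncn x < l)%N.
Proof.
move=> Jx; have [x0 xl] := comp_lt Jx.
split; last by rewrite truncn_lt_nat.
case: HJ => t [a [b [t0 [ha [hab [hba [hbl [hg hJ]]]]]]]].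
move/hJ: Jx => [k kt [h1 h2]]; apply/hJ; exists k => //.
have [n e] := ha k kt.
have := truncn_itv x0; move=> /andP [h3 _].
split; last lra.
rewrite e ler_nat truncn_ge_nat //; lra.
Qed.

Lemma comp_nonempty : exists x, J x.
Proof.
case: HJ => t [a [b [t0 [ha [hab [hba [hbl [hg hJ]]]]]]]].
exists (a 0%N); apply/hJ; exists 0%N => //.
have := hab 0%N t0; lra.
Qed.

Lemma comp_mid (j : nat) x y : J x -> J y -> j%:R - 1 <= x -> x <= j%:R ->
  j%:R <= y -> y <= j%:R + 1 -> J j%:R.
Proof.
case: HJ => t [a [b [t0 [ha [hab [hba [hbl [hg hJ]]]]]]]].
move=> /hJ [k kt [h1 h2]] /hJ [k' kt' [h3 h4]] *.
apply/hJ; case: (ltngtP k k') => hk.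
- have := ii_gap hab hba hg hk kt'; lra.
- have := ii_gap hab hba hg hk kt; have := hab k' kt'; lra.
- subst k'; exists k => //; lra.
Qed.

Lemma comp_adj (m : nat) x : J x -> m%:R - 1 <= x -> x <= m%:R ->
  (0 < m)%N /\ J (m.-1)%:R \/ J m%:R.
Proof.
move=> Jx h1 h2.
have [xm|xm] := eqVneq x m%:R; first by right; rewrite -xm.
left.
have xlt : x < m%:R by rewrite lt_neqAle xm h2.
case: HJ => t [a [b [t0 [ha [hab [hba [hbl [hg hJ]]]]]]]].
move/hJ: (Jx) => [k kt [h3 h4]].
have [n e] := ha k kt.
have nm : (n < m)%N by rewrite -(ltr_nat R) -e; lra.
split; first lia.
apply/hJ; exists k => //; split.
  by rewrite e ler_nat; lia.
have : m.-1%:R = m%:R - 1 :> R.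
  have e2 : m = m.-1.+1 by lia.
  by rewrite {2}e2 -natr1 addrK.
lra.
Qed.
End Comp.

Section Graph.
Variables (l r : nat) (I : 'I_r -> set R).
Hypothesis l0 : (0 < l)%N.
Hypothesis Hii : forall i, CL_cond_ii l (I i).
Hypothesis Hiii : CL_cond_iii I.
Hypothesis Hiv : CL_cond_iv I.

Local Notation V := (CL_V l r).
Local Notation S := (@CL_sets l r I).

Lemma J_cases (m : 'I_l.+1) x : CL_J m x ->
  (m == 0 :> nat) /\ x = 0 \/ (0 < m)%N /\ m%:R - 1 <= x /\ x <= m%:R.
Proof.
rewrite /CL_J; case: eqP => [->|h] H; first by left.
by right; split => //; lia.
Qed.

Lemma JJ_adj (m m' : 'I_l.+1) x : CL_J m x -> CL_J m' x -> (m <= m'.+1)%N.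
Proof.
move=> /J_cases [[/eqP -> _]//|[m0 [h1 h2]]] /J_cases [[/eqP e hx]|[m1 [h3 h4]]].
  rewrite e -(ler_nat R); lra.
rewrite -(ler_nat R) -natr1; lra.
Qed.

Lemma J_contains (m : 'I_l.+1) (j : nat) :
  (m = j :> nat) \/ (m = j.+1 :> nat) -> CL_J m j%:R.
Proof.
rewrite /CL_J => [[->|->]] /=.
  by case: eqP => [->|_] //; split; lra.
by split; rewrite -natr1; lra.
Qed.

Lemma I_meets_J i (m : 'I_l.+1) x : I i x -> CL_J m x ->
  ((0 < m)%N /\ I i (m.-1)%:R) \/ I i m%:R.
Proof.
move=> Ix /J_cases [[/eqP e ex]|[m0 [h1 h2]]].
  by right; rewrite e; rewrite ex in Ix.
by move: (comp_adj (Hii i) Ix h1 h2).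
Qed.

Lemma I_meets_JJ i (m m' : 'I_l.+1) x y : (m' = m.+1 :> nat) ->
  I i x -> CL_J m x -> I i y -> CL_J m' y -> I i m%:R.
Proof.
move=> e Ix /J_cases [[/eqP e' ex]|[m0 [h1 h2]]].
  by move=> *; rewrite e'; rewrite ex in Ix.
move=> Iy /J_cases [[/eqP e2 _]|[m1 [h3 h4]]]; first by rewrite e in e2.
move: h3 h4; rewrite e -natr1 => h3 h4.
apply: (comp_mid (Hii i) Ix Iy) => //; lra.
Qed.

Lemma inF j (v : V) : (j < l)%N -> (v \in @CL_F l r I j) =
  match v with inl m => (m == j :> nat) || (m == j.+1 :> nat)
             | inr i => `[< I i j%:R >] end.
Proof.
move=> jl; rewrite /CL_F !inE; case: v => [m|i].
  have -> : (inl m \in [set (inr i : V) | i in [set i | `[< I i j%:R >]]]) = false.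
    by apply/negbTE/imsetP => -[? _].
  rewrite orbF !(inj_eq (@inl_inj _ _)) -!val_eqE /= !inordK //; lia.
apply/idP/idP.
  by move=> /orP [/orP [] // | /imsetP [i' ]]; rewrite inE => h [->].
by move=> h; apply/orP; right; apply/imsetP; exists i => //; rewrite inE.
Qed.

Lemma common_clique (K : {set V}) x :
  (forall v, v \in K -> S v x) -> is_clique S K.
Proof. by move=> H u v uK vK uv; split => //; exists x; split; apply: H. Qed.

Lemma F_clique j : (j < l)%N -> is_clique S (@CL_F l r I j).
Proof.
move=> jl; apply: (@common_clique _ j%:R) => v; rewrite inF //.
case: v => [m|i] /=; last by move/asboolP.
by move=> /orP [/eqP|/eqP] e; apply: J_contains; [left|right].
Qed.

Lemma clique_sub (K : {set V}) : is_clique S K ->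
  exists2 j, (j < l)%N & K \subset @CL_F l r I j.
Proof.
move=> HK.
have [x Hx] : exists x, forall k, k \in [set i | inr i \in K] -> I k x.
  apply: Hiii => p q; rewrite !inE => pK qK.
  have [<-|pq] := eqVneq p q.
    by have [y Iy] := comp_nonempty (Hii p); exists y.
  have : inr p <> inr q :> V by move=> [] /eqP; rewrite (negbTE pq).
  by move/(HK _ _ pK qK) => [_ [y [Hy1 Hy2]]]; exists y.
have Hx' i : inr i \in K -> I i x by move=> iK; apply: Hx; rewrite inE.
case: (pselect (exists m m' : 'I_l.+1,
   [/\ inl m \in K, inl m' \in K & (m' = m.+1 :> nat)])).
  move=> [m [m' [mK m'K e]]].
  have ml : (m < l)%N by have := ltn_ord m'; lia.
  exists (nat_of_ord m) => //; apply/fintype.subsetP => v vK; rewrite inF //.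
  case: v vK => [m''|i] vK.
    have [-> | ne1] := eqVneq m'' m; first by rewrite eqxx.
    have [-> | ne2] := eqVneq m'' m'; first by rewrite e eqxx orbT.
    have [_ [y [y1 y2]]] := HK _ _ vK mK ltac:(by move=> [] /eqP; rewrite (negbTE ne1)).
    have [_ [z [z1 z2]]] := HK _ _ vK m'K ltac:(by move=> [] /eqP; rewrite (negbTE ne2)).
    have := JJ_adj y1 y2; have := JJ_adj y2 y1.
    have := JJ_adj z1 z2; have := JJ_adj z2 z1.
    move: ne1 ne2; rewrite -!val_eqE /= => /eqP ? /eqP ?; lia.
  have [_ [y [y1 y2]]] := HK _ _ vK mK ltac:(by []).
  have [_ [z [z1 z2]]] := HK _ _ vK m'K ltac:(by []).
  by apply/asboolP; apply: I_meets_JJ e y1 y2 z1 z2.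
move=> noA.
have noA' (m m' : 'I_l.+1) : inl m \in K -> inl m' \in K -> m = m'.
  move=> mK m'K; apply/eqP/negP => /negP ne.
  have [_ [y [y1 y2]]] := HK _ _ mK m'K ltac:(by move=> [] /eqP; rewrite (negbTE ne)).
  have := JJ_adj y1 y2; have := JJ_adj y2 y1.
  move: ne; rewrite -val_eqE /= => /eqP ne h1 h2.
  have : (m.+1 = m' :> nat) \/ (m'.+1 = m :> nat) by lia.
  by case=> e; apply: noA; [exists m, m'|exists m', m].
case: (pselect (exists m : 'I_l.+1, inl m \in K)).
  move=> [m mK].
  have KJ (m'' : 'I_l.+1) : inl m'' \in K -> m'' = m by move=> h; apply: noA'.
  have KI i : inr i \in K -> ((0 < m)%N /\ I i (m.-1)%:R) \/ I i m%:R.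
    move=> iK; have [_ [y [y1 y2]]] := HK _ _ iK mK ltac:(by []).
    exact: I_meets_J y1 y2.
  have [m0|mpos] := posnP m.
    exists 0%N => //; apply/fintype.subsetP => v vK; rewrite inF //.
    case: v vK => [m''|i] vK; first by rewrite (KJ _ vK) m0.
    by apply/asboolP; case: (KI _ vK) => [[]|]; rewrite m0 //; lia.
  case: (pselect (forall i, inr i \in K -> I i (m.-1)%:R)) => [allI|].
    exists m.-1; first by have := ltn_ord m; lia.
    apply/fintype.subsetP => v vK; rewrite inF; last by have := ltn_ord m; lia.
    case: v vK => [m''|i] vK; last by apply/asboolP; apply: allI.
    by rewrite (KJ _ vK) prednK // eqxx orbT.
  move=> /existsNP [p /not_implyP [pK Np]].
  have Ipm : I p m%:R by case: (KI _ pK) => [[]|].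
  have ml : (m < l)%N by have [_] := comp_lt (Hii p) Ipm; rewrite ltr_nat.
  exists (nat_of_ord m) => //; apply/fintype.subsetP => v vK; rewrite inF //.
  case: v vK => [m''|i] vK; first by rewrite (KJ _ vK) eqxx.
  apply/asboolP; case: (KI _ vK) => [[_ Iq]|] //.
  apply: contrapT => Nq.
  have ip : i <> p by move=> e; apply: Np; rewrite -e.
  have [_ [y [y1 y2]]] := HK _ _ vK pK ltac:(by move=> [] /ip).
  have [H _] := Hiv (ex_intro _ y (conj y1 y2)) Iq Np.
  have e : (m.-1)%:R + 1 = m%:R :> R by rewrite natr1 prednK.
  by rewrite e in H; apply: (H Nq).
move=> noJ.
case: (pselect (exists p, inr p \in K)).
  move=> [p pK]; have [Ip jl] := comp_trunc (Hii p) (Hx' _ pK).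
  exists (Num.truncn x) => //; apply/fintype.subsetP => v vK; rewrite inF //.
  case: v vK => [m''|i] vK; first by exfalso; apply: noJ; exists m''.
  by apply/asboolP; have [] := comp_trunc (Hii i) (Hx' _ vK).
move=> noI; exists 0%N => //; apply/fintype.subsetP => v vK.
by case: v vK => [m''|i] vK; exfalso; [apply: noJ; exists m''|apply: noI; exists i].
Qed.

End Graph.

Section Main.
Variables (l r : nat) (I : 'I_r -> set R).
Hypothesis l0 : (0 < l)%N.
Hypothesis Hii : forall i, CL_cond_ii l (I i).
Hypothesis Hiii : CL_cond_iii I.
Hypothesis Hiv : CL_cond_iv I.

Local Notation V := (CL_V l r).
Local Notation S := (@CL_sets l r I).
Local Notation F := (@CL_F l r I).

Lemma F_sub_inj j j' : (j < l)%N -> (j' < l)%N -> F j \subset F j' -> j = j'.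
Proof.
move=> jl j'l /fintype.subsetP H.
have h1 := H (inl (inord j)); have h2 := H (inl (inord j.+1)).
rewrite !(inF I l0) //= !inordK ?eqxx ?orbT in h1 h2; try lia.
all: have := h1 isT; have := h2 isT => /orP [] /eqP ? /orP [] /eqP ?; lia.
Qed.

Lemma maxclique_iff (K : {set V}) :
  is_max_clique S K <-> exists2 j, (j < l)%N & K = F j.
Proof.
split.
  move=> [HK Hmax]; have [j jl sub] := clique_sub l0 Hii Hiii Hiv HK.
  by exists j => //; apply/esym/Hmax => //; apply: (F_clique l0).
move=> [j jl ->]; split; first exact: (F_clique l0).
move=> K' HK' sub; have [j' j'l sub'] := clique_sub l0 Hii Hiii Hiv HK'.
have e := F_sub_inj jl j'l (fintype.subset_trans sub sub'); subst j'.
by apply/eqP; rewrite finset.eqEsubset sub' sub.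
Qed.

Lemma count_max : num_max_cliques S = l.
Proof.
rewrite /num_max_cliques.
have -> : [set K : {set V} | `[< is_max_clique S K >]] = [set F j | j : 'I_l].
  apply/setP => K; rewrite inE; apply/asboolP/imsetP.
    by move/maxclique_iff => [j jl ->]; exists (Ordinal jl).
  by move=> [j _ ->]; apply/maxclique_iff; exists (nat_of_ord j).
rewrite card_imset ?card_ord // => j j' /= e.
apply: val_inj; apply: F_sub_inj; [exact: ltn_ord|exact: ltn_ord|rewrite e; exact: fintype.subxx].
Qed.

Lemma JJ_iadj (a b : 'I_l.+1) :
  iadj S (inl a) (inl b) <-> (a.+1 = b :> nat \/ b.+1 = a :> nat).
Proof.
split.
  move=> [ne [x [h1 h2]]].
  have := JJ_adj l0 h1 h2; have := JJ_adj l0 h2 h1.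
  have : (a : nat) <> b by move=> e; apply: ne; congr inl; apply: val_inj.
  lia.
move=> h; split.
  by move=> [] e; subst b; case: h; lia.
exists (minn a b)%:R; split => /=; apply: J_contains; lia.
Qed.

Lemma path_J : induced_path S [seq (inl j : V) | j <- enum 'I_l.+1].
Proof.
split; first by rewrite map_inj_uniq ?enum_uniq //; apply: inl_inj.
rewrite size_map size_enum_ord; split => // x0 i j il jl.
rewrite !(nth_map ord0) ?size_enum_ord //.
rewrite JJ_iadj. rewrite -enumT !fintype.nth_enum_ord //.
all: have := size_enum_ord l.+1; rewrite enumT => ->; done.
Qed.

Lemma path_bound p : induced_path S p -> (size p <= l.+1)%N.
Proof.
move=> [up [p0 Hp]].
set x0 : V := inl ord0.
set k := (size p).-1.
have hsz : size p = k.+1 by rewrite /k prednK.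
pose pr (i : nat) : {set V} := [set nth x0 p i; nth x0 p i.+1].
have prc (i : 'I_k) : is_clique S (pr i).
  have ik := ltn_ord i.
  move=> u v; rewrite !inE => /orP [] /eqP -> /orP [] /eqP -> // _;
    apply/(Hp x0); rewrite ?hsz; first [by left | by right | lia].
pose P (i : 'I_k) (j : nat) := (j < l)%N && (pr i \subset F j).
have ex (i : 'I_k) : exists j, P i j.
  have [j jl sub] := clique_sub l0 Hii Hiii Hiv (prc i).
  by exists j; rewrite /P jl sub.
have fl (i : 'I_k) : (xchoose (ex i) < l)%N.
  by have /andP [] := xchooseP (ex i).
pose f (i : 'I_k) : 'I_l := Ordinal (fl i).
have finj : injective f.
  have key (i i' : 'I_k) : (i < i')%N -> f i = f i' -> False.
    move=> ii' e.
    have := xchooseP (ex i); have := xchooseP (ex i').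
    have e' : xchoose (ex i) = xchoose (ex i') by move: e => /(congr1 val).
    rewrite -e'; set j := xchoose (ex i) => /andP [jl s1] /andP [_ s2].
    have i'k := ltn_ord i'.
    have u1 : nth x0 p i \in F j by apply: (fintype.subsetP s2); rewrite !inE eqxx.
    have u2 : nth x0 p i'.+1 \in F j by apply: (fintype.subsetP s1); rewrite !inE eqxx orbT.
    have ne : nth x0 p i <> nth x0 p i'.+1.
      move/eqP; rewrite nth_uniq // ?hsz; lia.
    have := F_clique l0 jl u1 u2 ne.
    move/(Hp x0); rewrite ?hsz; lia.
  move=> i i' e; apply: val_inj.
  case: (ltngtP i i') => // h; exfalso; [exact: key h e|exact: key h (esym e)].
have := leq_card f finj; rewrite !card_ord hsz => h; lia.
Qed.

End Main.

Theorem mainTheorem4 (l r : nat) (I : 'I_r -> set R) :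
  (0 < l)%N ->
  (forall i, CL_cond_ii l (I i)) ->
  CL_cond_iii I ->
  CL_cond_iv I ->
  (forall K : {set CL_V l r},
      is_max_clique (@CL_sets l r I) K <-> exists2 j, (j < l)%N & K = @CL_F l r I j) /\
  num_max_cliques (@CL_sets l r I) = l /\
  longest_induced_path_length (@CL_sets l r I) l /\
  induced_path (@CL_sets l r I) [seq (inl j : CL_V l r) | j <- enum 'I_l.+1].
Proof.
move=> l0 Hii Hiii Hiv.
split; first by move=> K; apply: maxclique_iff.
split; first exact: count_max.
have hp := path_J I l0.
split => //; split.
  by exists [seq (inl j : CL_V l r) | j <- enum 'I_l.+1]; rewrite size_map size_enum_ord.
by move=> p; apply: (path_bound l0 Hii Hiii Hiv).
Qed.
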